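(* Assume $b,f,g$ are bounded and uniformly continuous in all variables, and that $\mathbb H$ is $L$-separable for some $L\ge0$. Then $\mathbb H$ is Lipschitz continuous in $z$ with Lipschitz constant $L$: $d(\mathbb H(t,x,z_1),\mathbb H(t,x,z_2))\le L|z_1-z_2|$ for all $t\in[0,T]$, $x\in\mathbb R^d$, $z_1,z_2\in\mathbb R^{dN}$.
   Context: Fix integers $d,N\ge 1$ and $T>0$. For $i=1,\dots,N$, $A_i$ is a domain in some Euclidean space and $A:=A_1\times\cdots\times A_N$; $(a^{-i},\tilde a_i)$ denotes $a$ with $i$-th component replaced by $\tilde a_i$. Data: $b:[0,T]\times\mathbb R^d\times A\to\mathbb R^d$, $f:[0,T]\times\mathbb R^d\times A\to\mathbb R^N$, $g:\mathbb R^d\to\mathbb R^N$. Let $\mathbb X:=[0,T]\times\mathbb R^d\times\mathbb R^{dN}$, $\theta=(t,x,z)$, $z=(z^1,\dots,z^N)$, $z^i\in\mathbb R^d$, $\theta^i:=(t,x,z^i)$; $h_i(t,x,z^i,a):=f_i(t,x,a)+b(t,x,a)\cdot z^i$, $h(\theta,a):=(h_i(\theta^i,a))_i$. For $\varepsilon>0$, $\mathcal E_\varepsilon(\theta)$ is the set of $a\in A$ with $h_i(\theta^i,a)\ge h_i(\theta^i,(a^{-i},\tilde a_i))-\varepsilon$ for all $i$, $\tilde a_i\in A_i$; $\mathbb H_\varepsilon(\theta):=\{y\in\mathbb R^N:|y-h(\theta,a)|<\varepsilon$ for some $a\in\mathcal E_\varepsilon(\theta)\}$, $\mathbb H(\theta):=\bigcap_{\varepsilon>0}\mathbb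 H_\varepsilon(\theta)$. $d$ is the Hausdorff distance $d(\mathbb H_1,\mathbb H_2)=[\sup_{y_1\in\mathbb H_1}d(y_1,\mathbb H_2)]\vee[\sup_{y_2\in\mathbb H_2}d(y_2,\mathbb H_1)]$, $d(y,\mathbb H'):=\inf_{y'\in\mathbb H'}|y-y'|$. $\mathbb H$ is $L$-separable if there exist $H^n:\mathbb X\to\mathbb R^N$, $n\ge1$, with $\mathbb H(\theta)=\mathrm{cl}\{H^n(\theta):n\ge1\}$ for all $\theta$, each $H^n$ measurable in $(t,x)$ and uniformly Lipschitz in $z$ with common constant $L$. *)

(* Defs.v *)
From HB Require Import structures.
From mathcomp Require Import all_boot all_order all_algebra.
From mathcomp Require Import all_classical all_reals all_analysis.
Set Implicit Arguments. Unset Strict Implicit. Unset Printing Implicit Defensive.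
Import Order.TTheory GRing.Theory Num.Theory.
Import numFieldNormedType.Exports.
Local Open Scope classical_set_scope.
Local Open Scope ring_scope.

(* Euclidean norm on matrices / row vectors (R^n = 'rV[R]_n, R^{dN} = 'M[R]_(N,d)). *)
Definition enorm (R : realType) (m n : nat) (M : 'M[R]_(m, n)) : R :=
  Num.sqrt (\sum_(i < m) \sum_(j < n) M i j ^+ 2).

Definition dotv (R : realType) (n : nat) (u v : 'rV[R]_n) : R :=
  \sum_(j < n) u 0 j * v 0 j.

Definition profile (R : realType) (N : nat) (k : 'I_N -> nat) : Type :=
  forall i : 'I_N, 'rV[R]_(k i).

Definition in_A (R : realType) (N : nat) (k : 'I_N -> nat)
  (A : forall i : 'I_N, set 'rV[R]_(k i)) (a : profile R k) : Prop :=
  forall i, A i (a i).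

Definition pdist (R : realType) (N : nat) (k : 'I_N -> nat) (a a' : profile R k) : R :=
  Num.sqrt (\sum_(i < N) enorm (a i - a' i) ^+ 2).

Definition repl (R : realType) (N : nat) (k : 'I_N -> nat) (a : profile R k)
  (i : 'I_N) (ai : 'rV[R]_(k i)) : profile R k :=
  @eqtype.dfwith _ (fun j => 'rV[R]_(k j)) a i ai.

Definition domain (R : realType) (n : nat) (D : set 'rV[R]_n) : Prop :=
  D !=set0 /\ open D /\ connected D.

Definition hvec (R : realType) (d N : nat) (k : 'I_N -> nat)
  (b : R -> 'rV[R]_d -> profile R k -> 'rV[R]_d)
  (f : R -> 'rV[R]_d -> profile R k -> 'rV[R]_N)
  (t : R) (x : 'rV[R]_d) (z : 'M[R]_(N, d)) (a : profile R k) : 'rV[R]_N :=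
  \row_(i < N) (f t x a 0 i + dotv (b t x a) (row i z)).

Definition Eeps (R : realType) (d N : nat) (k : 'I_N -> nat)
  (A : forall i : 'I_N, set 'rV[R]_(k i))
  (b : R -> 'rV[R]_d -> profile R k -> 'rV[R]_d)
  (f : R -> 'rV[R]_d -> profile R k -> 'rV[R]_N)
  (eps t : R) (x : 'rV[R]_d) (z : 'M[R]_(N, d)) : set (profile R k) :=
  [set a | in_A A a /\
     forall (i : 'I_N) (ai : 'rV[R]_(k i)), A i ai ->
       hvec b f t x z a 0 i >= hvec b f t x z (repl a ai) 0 i - eps].

Definition Heps (R : realType) (d N : nat) (k : 'I_N -> nat)
  (A : forall i : 'I_N, set 'rV[R]_(k i))
  (b : R -> 'rV[R]_d -> profile R k -> 'rV[R]_d)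
  (f : R -> 'rV[R]_d -> profile R k -> 'rV[R]_N)
  (eps t : R) (x : 'rV[R]_d) (z : 'M[R]_(N, d)) : set 'rV[R]_N :=
  [set y | exists2 a, Eeps A b f eps t x z a & enorm (y - hvec b f t x z a) < eps].

Definition Hset (R : realType) (d N : nat) (k : 'I_N -> nat)
  (A : forall i : 'I_N, set 'rV[R]_(k i))
  (b : R -> 'rV[R]_d -> profile R k -> 'rV[R]_d)
  (f : R -> 'rV[R]_d -> profile R k -> 'rV[R]_N)
  (t : R) (x : 'rV[R]_d) (z : 'M[R]_(N, d)) : set 'rV[R]_N :=
  [set y | forall eps : R, 0 < eps -> Heps A b f eps t x z y].

(* d(y, H') = inf_{y' in H'} |y - y'|  (extended real; inf of empty = +oo) *)
Definition point_dist (R : realType) (N : nat) (y : 'rV[R]_N) (H' : set 'rV[R]_N)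
  : \bar R :=
  ereal_inf [set (enorm (y - y'))%:E | y' in H'].

Definition hausdorff (R : realType) (N : nat) (H1 H2 : set 'rV[R]_N) : \bar R :=
  maxe (ereal_sup [set point_dist y1 H2 | y1 in H1])
       (ereal_sup [set point_dist y2 H1 | y2 in H2]).

Definition borel_measurable_tx (R : realType) (d N : nat) (T : R)
  (F : R -> 'rV[R]_d -> 'rV[R]_N) : Prop :=
  forall U : set 'rV[R]_N, open U ->
    <<s [set O : set (R * 'rV[R]_d)%type | open O] >>
      [set p : R * 'rV[R]_d | 0 <= p.1 <= T /\ U (F p.1 p.2)].

Definition L_separable (R : realType) (d N : nat) (k : 'I_N -> nat) (T : R)
  (A : forall i : 'I_N, set 'rV[R]_(k i))
  (b : R -> 'rV[R]_d -> profile R k -> 'rV[R]_d)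
  (f : R -> 'rV[R]_d -> profile R k -> 'rV[R]_N) (L : R) : Prop :=
  exists Hn : nat -> R -> 'rV[R]_d -> 'M[R]_(N, d) -> 'rV[R]_N,
    [/\ forall t x z, 0 <= t <= T ->
          Hset A b f t x z = closure (range (fun n => Hn n t x z)),
        forall n z, borel_measurable_tx T (fun t x => Hn n t x z) &
        forall n t x z1 z2, 0 <= t <= T ->
          enorm (Hn n t x z1 - Hn n t x z2) <= L * enorm (z1 - z2)].

Definition bounded_on_TXA (R : realType) (d N m : nat) (k : 'I_N -> nat) (T : R)
  (A : forall i : 'I_N, set 'rV[R]_(k i))
  (F : R -> 'rV[R]_d -> profile R k -> 'rV[R]_m) : Prop :=
  exists M : R, forall t x a, 0 <= t <= T -> in_A A a -> enorm (F t x a) <= M.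

Definition unif_cont_on_TXA (R : realType) (d N m : nat) (k : 'I_N -> nat) (T : R)
  (A : forall i : 'I_N, set 'rV[R]_(k i))
  (F : R -> 'rV[R]_d -> profile R k -> 'rV[R]_m) : Prop :=
  forall eps : R, 0 < eps -> exists2 delta : R, 0 < delta &
    forall t x a t' x' a', 0 <= t <= T -> 0 <= t' <= T -> in_A A a -> in_A A a' ->
      Num.sqrt ((t - t') ^+ 2 + enorm (x - x') ^+ 2 + pdist a a' ^+ 2) < delta ->
      enorm (F t x a - F t' x' a') < eps.

Definition bounded_Rd (R : realType) (d m : nat) (g : 'rV[R]_d -> 'rV[R]_m) : Prop :=
  exists M : R, forall x, enorm (g x) <= M.

Definition unif_cont_Rd (R : realType) (d m : nat) (g : 'rV[R]_d -> 'rV[R]_m) : Prop :=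
  forall eps : R, 0 < eps -> exists2 delta : R, 0 < delta &
    forall x x', enorm (x - x') < delta -> enorm (g x - g x') < eps.

(* Main.v *)
Require Import Defs.
From HB Require Import structures.
From mathcomp Require Import all_boot all_order all_algebra.
From mathcomp Require Import all_classical all_reals all_analysis.
From mathcomp Require Import ring lra.
Import Order.TTheory GRing.Theory Num.Theory.
Import numFieldNormedType.Exports.
Local Open Scope classical_set_scope.
Local Open Scope ring_scope.

Lemma enorm_ge0 {R : realType} {m n} (M : 'M[R]_(m, n)) : 0 <= enorm M.
Proof. exact: sqrtr_ge0. Qed.

Lemma enorm_opp {R : realType} {m n} (M : 'M[R]_(m, n)) : enorm (- M) = enorm M.
Proof.
rewrite /enorm; congr Num.sqrt; apply: eq_bigr => i _; apply: eq_bigr => j _.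
by rewrite mxE sqrrN.
Qed.

Lemma entry_le_enorm {R : realType} {m n} (M : 'M[R]_(m, n)) i j :
  `|M i j| <= enorm M.
Proof.
rewrite /enorm -sqrtr_sqr ler_sqrt; last first.
  by apply: sumr_ge0 => i' _; apply: sumr_ge0 => j' _; exact: sqr_ge0.
rewrite (bigD1 i) //= (bigD1 j) //= -addrA lerDl.
apply: addr_ge0; first by apply: sumr_ge0 => j' _; exact: sqr_ge0.
by apply: sumr_ge0 => i' _; apply: sumr_ge0 => j' _; exact: sqr_ge0.
Qed.

Lemma enorm_add_small {R : realType} {m n} (u v : 'M[R]_(m, n)) (e : R) :
  0 < e -> (forall i j, `|u i j| < e) ->
  enorm (u + v) <= enorm v + (m * n)%:R * e.
Proof.
move=> e0 hu.
set s := enorm v; set K : R := (m * n)%:R.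
have s0 : 0 <= s by exact: enorm_ge0.
have K0 : 0 <= K by exact: ler0n.
have hsum : 0 <= \sum_(i < m) \sum_(j < n) v i j ^+ 2.
  by apply: sumr_ge0 => i' _; apply: sumr_ge0 => j' _; exact: sqr_ge0.
have hs2 : s ^+ 2 = \sum_(i < m) \sum_(j < n) v i j ^+ 2 by rewrite sqr_sqrtr.
have -> : enorm (u + v) = Num.sqrt (\sum_(i < m) \sum_(j < n)
    (v i j ^+ 2 + (2 * u i j * v i j + u i j ^+ 2))).
  rewrite /enorm; congr Num.sqrt; apply: eq_bigr => i _; apply: eq_bigr => j _.
  rewrite mxE; ring.
have hterm : forall i j, 2 * u i j * v i j + u i j ^+ 2 <= 2 * e * s + e ^+ 2.
  move=> i j.
  have hv := entry_le_enorm v i j.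
  have hui := hu i j.
  have h1 : 2 * u i j * v i j <= 2 * e * s.
    rewrite -mulrA -(mulrA 2 e s) ler_pM2l //.
    apply: le_trans (ler_norm _) _; rewrite normrM.
    by apply: ler_pM => //; apply: ltW.
  have h2 : u i j ^+ 2 <= e ^+ 2.
    rewrite -real_normK ?num_real // ; apply: lerXn2r => //; rewrite ?nnegrE //.
      exact: ltW.
    exact: ltW.
  exact: lerD.
have hbound : \sum_(i < m) \sum_(j < n) (v i j ^+ 2 + (2 * u i j * v i j + u i j ^+ 2))
    <= s ^+ 2 + K * (2 * e * s + e ^+ 2).
  rewrite hs2.
  under eq_bigr do rewrite big_split /=.
  rewrite big_split /= lerD2l.
  apply: le_trans (_ : \sum_(i < m) \sum_(j < n) (2 * e * s + e ^+ 2) <= _).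
    by apply: ler_sum => i _; apply: ler_sum => j _; exact: hterm.
  rewrite !sumr_const !card_ord -mulrnA mulnC /K.
  by rewrite (mulr_natl (2 * e * s + e ^+ 2) (m * n)).
have hK : K * (2 * e * s + e ^+ 2) <= (s + K * e) ^+ 2 - s ^+ 2.
  have KK : K <= K ^+ 2.
    rewrite /K -natrX ler_nat; case: (m * n)%N => // p.
    by rewrite expnS leq_pmulr.
  have : K * e ^+ 2 <= K ^+ 2 * e ^+ 2 by apply: ler_wpM2r => //; exact: sqr_ge0.
  move=> H; rewrite -subr_ge0; rewrite -subr_ge0 in H.
  by apply: le_trans H _; rewrite le_eqVlt; apply/orP; left; apply/eqP; ring.
rewrite -(@ger0_norm _ (s + K * e)); last first.
  by apply: addr_ge0 => //; apply: mulr_ge0 => //; exact: ltW.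
rewrite -sqrtr_sqr ler_sqrt; last exact: sqr_ge0.
apply: le_trans hbound _.
by rewrite -lerBrDl.
Qed.

Lemma point_dist_claim {R : realType} {N : nat} (Ha Hb : set 'rV[R]_N)
  (Fa Fb : nat -> 'rV[R]_N) (c : R) :
  (1 <= N)%N ->
  Ha = closure (range Fa) -> Hb = closure (range Fb) ->
  (forall n, enorm (Fa n - Fb n) <= c) ->
  forall y, Ha y -> (point_dist y Hb <= c%:E)%E.
Proof.
move=> N1 -> -> hF y hy.
apply/lee_addgt0Pr => e e0.
set K : R := (1 * N)%:R.
have K0 : 0 < K by rewrite /K ltr0n mul1n.
have e'0 : 0 < e / K by apply: divr_gt0.
have [_ [[n _ <-] hb]] := hy (ball y (e / K)) (nbhsx_ballx _ _ e'0).
apply: ge_ereal_inf; exists (enorm (y - Fb n))%:E.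
  by exists (Fb n) => //; apply: subset_closure; exists n.
rewrite -EFinD lee_fin.
have -> : y - Fb n = (y - Fa n) + (Fa n - Fb n) by rewrite addrA subrK.
apply: le_trans (enorm_add_small (y - Fa n) (Fa n - Fb n) (e / K) e'0 _) _.
  by move=> i j; case: hb => _ H; have := H i j; rewrite !mxE.
rewrite -/K (mulrC K) divfK ?gt_eqF // lerD2r.
exact: hF.
Qed.

Theorem proposition4p11 (R : realType) (d N : nat) (T : R)
  (k : 'I_N -> nat) (A : forall i : 'I_N, set 'rV[R]_(k i))
  (b : R -> 'rV[R]_d -> profile R k -> 'rV[R]_d)
  (f : R -> 'rV[R]_d -> profile R k -> 'rV[R]_N)
  (g : 'rV[R]_d -> 'rV[R]_N) (L : R) :
  (1 <= d)%N -> (1 <= N)%N -> 0 < T ->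
  (forall i, domain (A i)) ->
  bounded_on_TXA T A b -> unif_cont_on_TXA T A b ->
  bounded_on_TXA T A f -> unif_cont_on_TXA T A f ->
  bounded_Rd g -> unif_cont_Rd g ->
  0 <= L -> L_separable T A b f L ->
  forall (t : R) (x : 'rV[R]_d) (z1 z2 : 'M[R]_(N, d)), 0 <= t <= T ->
    (hausdorff (Hset A b f t x z1) (Hset A b f t x z2) <= (L * enorm (z1 - z2))%:E)%E.
Proof.
move=> _ N1 _ _ _ _ _ _ _ _ L0 [Hn [HE _ HL]] t x z1 z2 ht.
rewrite /hausdorff ge_max; apply/andP; split; apply: ge_ereal_sup => _ [y hy <-].
- apply: (point_dist_claim (Hset A b f t x z1) (Hset A b f t x z2) (fun n => Hn n t x z1) (fun n => Hn n t x z2)) => //.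
  + exact: HE.
  + exact: HE.
  + by move=> n; exact: HL.
- apply: (point_dist_claim (Hset A b f t x z2) (Hset A b f t x z1) (fun n => Hn n t x z2) (fun n => Hn n t x z1)) => //.
  + exact: HE.
  + exact: HE.
  + move=> n; apply: le_trans (HL n t x z2 z1 ht) _.
    by rewrite -opprB enorm_opp.
Qed.
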